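(* Let $R$ be an $F$-finite $F$-pure ring of prime characteristic $p$ and $\mathfrak a,J$ ideals with $\mathfrak a\subseteq\sqrt J$. Then $\operatorname{ct}_J(\mathfrak a)=c^J(\mathfrak a)$ if and only if $c^{J_e}(\mathfrak a)=c^{J^{[p^e]}}(\mathfrak a)$ for every $e\in\mathbb N$.
   Context: $J_e=\{f\in R\mid \varphi(f^{1/p^e})\in J \text{ for all }\varphi\in\operatorname{Hom}_R(R^{1/p^e},R)\}$; $b^J_{\mathfrak a}(p^e)=\max\{t\in\mathbb N\mid\mathfrak a^t\not\subseteq J_e\}$ and $\operatorname{ct}_J(\mathfrak a)=\lim_e b^J_{\mathfrak a}(p^e)/p^e$. For ideals $\mathfrak a\subseteq\sqrt{\mathfrak b}$, $\nu^{\mathfrak b}_{\mathfrak a}(p^e)=\max\{m\in\mathbb N\mid\mathfrak a^m\not\subseteq\mathfrak b^{[p^e]}\}$ and $c^{\mathfrak b}(\mathfrak a)=\lim_e\nu^{\mathfrak b}_{\mathfrak a}(p^e)/p^e$; $J^{[p^e]}$ is the ideal generated by $p^e$-th powers of elements of $J$. *)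

(* Defs.v *)
From HB Require Import structures.
From mathcomp Require Import all_boot all_algebra.
From Stdlib Require Import Reals.
Set Implicit Arguments. Unset Strict Implicit. Unset Printing Implicit Defensive.
Import GRing.Theory.
Local Open Scope ring_scope.

Section Defs.
Variable A : comNzRingType.

Definition psubset (I K : A -> Prop) : Prop := forall x, I x -> K x.

Definition is_ideal (I : A -> Prop) : Prop :=
  I 0 /\ (forall x y, I x -> I y -> I (x + y)) /\ (forall r x, I x -> I (r * x)).

Definition gen_ideal (S : A -> Prop) : A -> Prop := fun x =>
  exists l : seq (A * A), (forall q, q \in l -> S q.2) /\
    x = \sum_(q <- l) q.1 * q.2.

Definition ideal_pow (a : A -> Prop) (t : nat) : A -> Prop :=
  gen_ideal (fun x => exists s : seq A,
    size s = t /\ (forall y, y \in s -> a y) /\ x = \prod_(y <- s) y).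

Definition frob_pow (J : A -> Prop) (q : nat) : A -> Prop :=
  gen_ideal (fun x => exists y, J y /\ x = y ^+ q).

Definition radical (J : A -> Prop) : A -> Prop := fun x => exists n, J (x ^+ n).

(* Elements of Hom_R(R^{1/p^e}, R): identifying R^{1/p^e} with R via
   x^{1/p^e} <-> x, these are additive maps phi : A -> A with
   phi (r^(p^e) x) = r phi(x). *)
Definition pe_linear (p e : nat) (phi : A -> A) : Prop :=
  (forall x y, phi (x + y) = phi x + phi y) /\
  (forall r x, phi (r ^+ (expn p e) * x) = r * phi x).

(* J_e = { f | phi(f^{1/p^e}) \in J for all phi in Hom_R(R^{1/p^e},R) } *)
Definition Je (p e : nat) (J : A -> Prop) : A -> Prop := fun f =>
  forall phi, pe_linear p e phi -> J (phi f).

Definition noetherian : Prop :=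
  forall I, is_ideal I -> exists s : seq A,
    forall x, I x <-> gen_ideal (fun y => y \in s) x.

(* F-finite: Noetherian and R^{1/p} is a finitely generated R-module. *)
Definition F_finite (p : nat) : Prop :=
  noetherian /\ exists g : seq A, forall x,
    exists l : seq (A * A), (forall q, q \in l -> q.2 \in g) /\
      x = \sum_(q <- l) q.1 ^+ p * q.2.

(* F-pure (for F-finite rings equivalently F-split): R -> R^{1/p} splits. *)
Definition F_pure (p : nat) : Prop :=
  exists phi, pe_linear p 1 phi /\ phi 1 = 1.

Definition is_max_nat (P : nat -> Prop) (m : nat) : Prop :=
  P m /\ forall n, P n -> leq n m.

Definition bJ (p : nat) (a J : A -> Prop) (e m : nat) : Prop :=
  is_max_nat (fun t => ~ psubset (ideal_pow a t) (Je p e J)) m.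

Definition nu (p : nat) (a b : A -> Prop) (e m : nat) : Prop :=
  is_max_nat (fun t => ~ psubset (ideal_pow a t) (frob_pow b (expn p e))) m.

Definition ct_is (p : nat) (a J : A -> Prop) (l : R) : Prop :=
  exists u : nat -> nat, (forall e, bJ p a J e (u e)) /\
    Un_cv (fun e => Rdiv (INR (u e)) (INR (expn p e))) l.

Definition c_is (p : nat) (a b : A -> Prop) (l : R) : Prop :=
  exists u : nat -> nat, (forall e, nu p a b e (u e)) /\
    Un_cv (fun e => Rdiv (INR (u e)) (INR (expn p e))) l.

End Defs.

(* Main.v *)
Require Import Defs.
From HB Require Import structures.
From mathcomp Require Import all_boot all_algebra.
From Stdlib Require Import Reals.
From mathcomp Require Import zify.
From Stdlib Require Import Lra Lia Classical ClassicalEpsilon.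

Section RealL.
Local Open Scope R_scope.

Lemma cv_ext (f g : nat -> R) l : (forall n, f n = g n) -> Un_cv f l -> Un_cv g l.
Proof. intros H Hf eps Heps; destruct (Hf eps Heps) as [N HN]; exists N; intros n Hn; rewrite <- H; auto. Qed.

Lemma squeeze (a b c : nat -> R) l : (forall n, a n <= b n <= c n) ->
  Un_cv a l -> Un_cv c l -> Un_cv b l.
Proof.
intros Hb Ha Hc eps Heps; destruct (Ha eps Heps) as [N1 H1]; destruct (Hc eps Heps) as [N2 H2].
exists (Nat.max N1 N2); intros n Hn.
assert (K1 := H1 n ltac:(lia)); assert (K2 := H2 n ltac:(lia)).
unfold R_dist in *; apply Rabs_def2 in K1; apply Rabs_def2 in K2.
destruct (Hb n); apply Rabs_def1; lra.
Qed.

Lemma cv_const c : Un_cv (fun _ => c) c.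
Proof. intros eps Heps; exists 0%nat; intros; unfold R_dist; rewrite Rminus_diag Rabs_R0; lra. Qed.

Lemma lim_le_const (f : nat -> R) l K : (forall n, f n <= K) -> Un_cv f l -> l <= K.
Proof. intros H Hf; apply: (Rle_cv_lim H Hf); apply: cv_const. Qed.

Lemma INR_expn_pos (p e : nat) : (0 < p)%nat -> 0 < INR (expn p e).
Proof. move=> Hp; apply: lt_0_INR; apply/ltP; by rewrite expn_gt0 Hp. Qed.

Lemma INR_expnD p e e' : INR (expn p (e + e')) = INR (expn p e) * INR (expn p e').
Proof. by rewrite expnD -mult_INR. Qed.

Lemma cv_shift_scale p (u : nat -> nat) l e : (0 < p)%nat ->
  Un_cv (fun E => Rdiv (INR (u E)) (INR (expn p E))) l ->
  Un_cv (fun e' => Rdiv (INR (u (e + e')%nat)) (INR (expn p e'))) (INR (expn p e) * l).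
Proof.
move=> Hp H.
have H1 := CV_mult _ _ _ _ (cv_const (INR (expn p e))) (CV_shift' _ e _ H).
eapply cv_ext; last exact H1; move=> n /=.
rewrite (Nat.add_comm n e); change (Nat.add e n) with (addn e n); rewrite INR_expnD.
have := INR_expn_pos p e Hp; have := INR_expn_pos p n Hp => ? ?.
unfold Rdiv; field; lra.
Qed.

Lemma cv_small p C : (1 < p)%nat -> Un_cv (fun e => Rdiv C (INR (expn p e))) 0.
Proof.
move=> Hp eps Heps.
destruct (INR_archimed eps (Rabs C) Heps) as [N HN].
exists N => n Hn; unfold R_dist; rewrite Rminus_0_r.
have Hpos : 0 < INR (expn p n) by apply: INR_expn_pos; lia.
have Hle : INR N <= INR (expn p n).
  apply: le_INR; apply/leP; apply: leq_trans (ltnW (ltn_expl n Hp)); apply/leP; lia.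
unfold Rdiv; rewrite Rabs_mult Rabs_inv (Rabs_right (INR _)); last lra.
apply: (Rmult_lt_reg_r (INR (expn p n))) => //.
rewrite Rmult_assoc Rinv_l; last lra.
have := Rabs_pos C; nra.
Qed.


Lemma div_mono (a b q : nat) : (a <= b)%nat ->
  Rdiv (INR a) (INR q) <= Rdiv (INR b) (INR q).
Proof.
move=> H; have HI : INR a <= INR b by apply: le_INR; apply/leP.
case: q => [|q]; first by rewrite /= /Rdiv Rinv_0 !Rmult_0_r; lra.
unfold Rdiv; apply: Rmult_le_compat_r => //.
apply: Rlt_le; apply: Rinv_0_lt_compat; apply: lt_0_INR; lia.
Qed.

Lemma div_lt_bound (a b q : nat) : (0 < q)%nat -> (a < b * q)%nat ->
  Rdiv (INR a) (INR q) <= INR b.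
Proof.
move=> Hq H; have Hq' : 0 < INR q by apply: lt_0_INR; apply/ltP.
have : INR a <= INR b * INR q by rewrite -mult_INR; apply: le_INR; apply/leP; apply: ltnW.
move=> Hab; unfold Rdiv; apply: (Rmult_le_reg_r (INR q)) => //.
rewrite Rmult_assoc Rinv_l; lra.
Qed.

Lemma lower_bound (q x l0 C L : R) : 0 < q -> q * l0 <= L -> L <= x + C ->
  l0 - C / q <= x / q.
Proof.
move=> Hq H1 H2; apply: (Rmult_le_reg_r q) => //.
have -> : (l0 - C / q) * q = q * l0 - C by field; lra.
have -> : x / q * q = x by field; lra.
lra.
Qed.

Lemma cv_lower p C l0 : (1 < p)%nat ->
  Un_cv (fun e => l0 - Rdiv C (INR (expn p e))) l0.
Proof.
move=> Hp; have H := CV_minus _ _ _ _ (cv_const l0) (cv_small p C Hp).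
by rewrite Rminus_0_r in H.
Qed.

End RealL.

Set Implicit Arguments. Unset Strict Implicit. Unset Printing Implicit Defensive.
Import GRing.Theory.

Section Alg.
Local Open Scope ring_scope.
Variable A : comNzRingType.

Lemma gi_ideal (S : A -> Prop) : is_ideal (gen_ideal S).
Proof.
split; [|split].
- by exists [::]; split => //; rewrite big_nil.
- move=> x y [l1 [H1 ->]] [l2 [H2 ->]]; exists (l1 ++ l2); split; last by rewrite big_cat.
  by move=> q; rewrite mem_cat => /orP [] ?; [apply: H1|apply: H2].
- move=> r x [l [H ->]]; exists (map (fun q => (r * q.1, q.2)) l); split.
  + by move=> q /mapP [q' Hq' ->] /=; apply: H.
  + by rewrite big_map mulr_sumr; apply: eq_bigr => q _; rewrite mulrA.
Qed.

Lemma gi_gen (S : A -> Prop) x : S x -> gen_ideal S x.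
Proof.
move=> Sx; exists [:: (1, x)]; split; first by move=> q; rewrite inE => /eqP ->.
by rewrite big_seq1 mul1r.
Qed.

Lemma ideal_sum (K : A -> Prop) (I : Type) (l : seq I) (F : I -> A) :
  is_ideal K -> (forall i, List.In i l -> K (F i)) -> K (\sum_(i <- l) F i).
Proof.
move=> [K0 [KD KM]]; elim: l => [|i l IH] H; first by rewrite big_nil.
rewrite big_cons; apply: KD; first by apply: H; left.
by apply: IH => j Hj; apply: H; right.
Qed.

Lemma gi_min (S K : A -> Prop) : is_ideal K -> (forall x, S x -> K x) ->
  psubset (gen_ideal S) K.
Proof.
move=> HK HS x [l [Hl ->]]; apply: ideal_sum => // q.
have Hin : forall q, List.In q l -> q \in l.
  clear; elim: l => // a l IH q [->|H]; rewrite inE ?eqxx //.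
  by rewrite IH ?orbT.
move=> /Hin /Hl /HS; case: HK => _ [_ HM]; exact: HM.
Qed.

Lemma ideal_mul (K : A -> Prop) r x : is_ideal K -> K x -> K (r * x).
Proof. by case=> _ [_ H]; apply: H. Qed.
Lemma ideal_mulr (K : A -> Prop) r x : is_ideal K -> K x -> K (x * r).
Proof. by move=> HK Kx; rewrite mulrC; apply: ideal_mul. Qed.
Lemma ideal_add (K : A -> Prop) x y : is_ideal K -> K x -> K y -> K (x + y).
Proof. by case=> _ [H _]; apply: H. Qed.

Lemma gi_mono (S T : A -> Prop) : (forall x, S x -> T x) -> psubset (gen_ideal S) (gen_ideal T).
Proof. move=> H; apply: gi_min; first exact: gi_ideal. by move=> x /H; apply: gi_gen. Qed.

Lemma gi_prod (S T U : A -> Prop) x y : gen_ideal S x -> gen_ideal T y ->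
  (forall u v, S u -> T v -> U (u * v)) -> gen_ideal U (x * y).
Proof.
move=> Hx Hy H.
have HU := gi_ideal U.
have HT : psubset (gen_ideal T) (fun z => forall u, S u -> gen_ideal U (u * z)).
  apply: gi_min.
  - split; [|split].
    + by move=> u _; rewrite mulr0; case: HU.
    + by move=> a b Ha Hb u Su; rewrite mulrDr; apply: ideal_add; [|apply: Ha|apply: Hb].
    + by move=> r a Ha u Su; rewrite mulrCA; apply: ideal_mul => //; apply: Ha.
  - by move=> v Tv u Su; apply: gi_gen; apply: H.
have HS : psubset (gen_ideal S) (fun z => gen_ideal U (z * y)).
  apply: gi_min.
  - split; [|split].
    + by rewrite mul0r; case: HU.
    + by move=> a b Ha Hb; rewrite mulrDl; apply: ideal_add.
    + by move=> r a Ha; rewrite -mulrA; apply: ideal_mul.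
  - by move=> u Su; apply: HT.
exact: HS.
Qed.


Variable p : nat.
Hypothesis hchar : p \in GRing.pchar A.

Lemma frobD e (x y : A) : (x + y) ^+ (expn p e) = x ^+ (expn p e) + y ^+ (expn p e).
Proof.
elim: e => [|e IH]; first by rewrite expn0 !expr1.
by rewrite !expnSr !exprM IH -!(pFrobenius_autE hchar) rmorphD.
Qed.

Lemma frob0 e : (0 : A) ^+ (expn p e) = 0.
Proof. by rewrite expr0n expn_eq0; case: (p) hchar => // /(pcharf_prime). Qed.

Lemma Je_ideal e (J : A -> Prop) : is_ideal J -> is_ideal (Je p e J).
Proof.
move=> HJ; split; [|split].
- move=> phi [Hadd _].
  have -> : phi 0 = 0.
    have := Hadd 0 0; rewrite addr0.
    by move/(congr1 (fun z => z - phi 0)); rewrite addrK subrr => <-.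
  by case: HJ.
- move=> x y Hx Hy phi Hphi; have [Hadd _] := Hphi.
  by rewrite Hadd; apply: ideal_add => //; [apply: Hx|apply: Hy].
- move=> r x Hx phi [Hadd Hlin].
  apply: (Hx (fun z => phi (r * z))); split.
  + by move=> a b; rewrite mulrDr Hadd.
  + by move=> s z; rewrite mulrCA Hlin.
Qed.

Lemma frob_ideal (J : A -> Prop) q : is_ideal (frob_pow J q).
Proof. exact: gi_ideal. Qed.

Lemma frob_gen (J : A -> Prop) q y : J y -> frob_pow J q (y ^+ q).
Proof. by move=> Jy; apply: gi_gen; exists y. Qed.

Lemma frob_mono (I K : A -> Prop) q : psubset I K -> psubset (frob_pow I q) (frob_pow K q).
Proof. by move=> H; apply: gi_mono => x [y [/H Ky ->]]; exists y. Qed.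

Lemma frob_sub (I K : A -> Prop) q : is_ideal K -> (forall y, I y -> K (y ^+ q)) ->
  psubset (frob_pow I q) K.
Proof. by move=> HK H; apply: gi_min => // x [y [Iy ->]]; apply: H. Qed.

Lemma frob1 (J : A -> Prop) : is_ideal J -> forall x, frob_pow J (expn p 0) x <-> J x.
Proof.
move=> HJ x; rewrite expn0; split.
- by apply: frob_sub => // y Jy; rewrite expr1.
- by move=> Jx; rewrite -(expr1 x); apply: frob_gen.
Qed.

Lemma frob_in_Je e (J : A -> Prop) : is_ideal J -> psubset (frob_pow J (expn p e)) (Je p e J).
Proof.
move=> HJ; apply: frob_sub; first exact: Je_ideal.
move=> y Jy phi [_ Hl]; rewrite -(mulr1 (y ^+ _)) Hl; exact: ideal_mulr.
Qed.

Lemma frob_frob_sub e e' (J : A -> Prop) :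
  psubset (frob_pow J (expn p (e + e'))) (frob_pow (frob_pow J (expn p e)) (expn p e')).
Proof.
apply: frob_sub; first exact: frob_ideal.
move=> y Jy; rewrite expnD exprM; apply: frob_gen; exact: frob_gen.
Qed.

Lemma frob_pow_elt e (S : A -> Prop) x : gen_ideal S x ->
  gen_ideal (fun z => exists y, S y /\ z = y ^+ (expn p e)) (x ^+ (expn p e)).
Proof.
move=> [l [Hl ->]]; elim: l Hl => [|q l IH] Hl.
  by rewrite big_nil frob0; case: (gi_ideal (fun z => exists y, S y /\ z = y ^+ (expn p e))).
rewrite big_cons frobD; apply: ideal_add; first exact: gi_ideal.
- rewrite exprMn; apply: ideal_mul; first exact: gi_ideal.
  by apply: gi_gen; exists q.2; split => //; apply: Hl; rewrite inE eqxx.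
- by apply: IH => q' Hq'; apply: Hl; rewrite inE Hq' orbT.
Qed.

Lemma frob_frob_sup e e' (J : A -> Prop) :
  psubset (frob_pow (frob_pow J (expn p e)) (expn p e')) (frob_pow J (expn p (e + e'))).
Proof.
apply: frob_sub; first exact: frob_ideal.
move=> y Hy; have := frob_pow_elt e' Hy.
apply: gi_mono => z [w [[j [Jj ->]] ->]]; exists j; split => //.
by rewrite -exprM -expnD addnC.
Qed.

Lemma Je_frob_sub e e' (J : A -> Prop) : is_ideal J ->
  psubset (frob_pow (Je p e J) (expn p e')) (Je p (e + e') J).
Proof.
move=> HJ; apply: frob_sub; first exact: Je_ideal.
move=> g Hg phi [Hadd Hl]; apply: (Hg (fun x => phi (x ^+ (expn p e')))); split.
- by move=> x y; rewrite frobD Hadd.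
- by move=> r x; rewrite exprMn -exprM -expnD Hl.
Qed.

Lemma frobJ_sub e e' (J : A -> Prop) : is_ideal J ->
  psubset (frob_pow J (expn p (e + e'))) (frob_pow (Je p e J) (expn p e')).
Proof.
move=> HJ x /frob_frob_sub; apply: frob_mono; exact: frob_in_Je.
Qed.


Definition mono_gen (s : seq A) t : A -> Prop := fun x =>
  exists l : seq A, size l = t /\ (forall y, y \in l -> y \in s) /\ x = \prod_(y <- l) y.

Lemma expand (a : A -> Prop) (s : seq A) t :
  (forall x, a x <-> gen_ideal (fun y => y \in s) x) ->
  psubset (ideal_pow a t) (gen_ideal (mono_gen s t)).
Proof.
move=> Ha; apply: gi_min; first exact: gi_ideal.
move=> x [l [<- [Hl ->]]]; clear x t.
elim: l Hl => [|y l IH] Hl.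
  by apply: gi_gen; exists [::]; split.
rewrite big_cons; apply: (gi_prod (S := fun y => y \in s) (T := mono_gen s (size l))).
- by apply/Ha; apply: Hl; rewrite inE eqxx.
- by apply: IH => z Hz; apply: Hl; rewrite inE Hz orbT.
- move=> u v us [l' [Hs [Hl' ->]]]; exists (u :: l'); split; first by rewrite /= Hs.
  split; last by rewrite big_cons.
  by move=> z; rewrite inE => /orP [/eqP ->|/Hl'].
Qed.

Lemma count_split (g : A) (l : seq A) :
  \prod_(y <- l) y = g ^+ count_mem g l * \prod_(y <- filter (predC1 g) l) y.
Proof.
elim: l => [|x l IH]; first by rewrite !big_nil mulr1.
rewrite /= big_cons; case: (eqVneq x g) => [->|Hxg] /=.
  by rewrite ?eqxx IH add1n exprS mulrA.
by rewrite big_cons IH mulrCA add0n.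
Qed.

Lemma prod_nseq n (g : A) : \prod_(i <- nseq n g) i = g ^+ n.
Proof. by elim: n => [|n IH]; rewrite ?big_nil ?expr0 // big_cons IH exprS. Qed.

Lemma split_mono (s : seq A) (q : nat) (l : seq A) : (0 < q)%nat -> (forall y, y \in l -> y \in s) ->
  exists l1 l2, \prod_(y <- l) y = (\prod_(y <- l1) y) ^+ q * \prod_(y <- l2) y /\
    (forall y, y \in l1 -> y \in s) /\ (size l = q * size l1 + size l2)%nat /\
    (size l2 <= size s * q)%nat.
Proof.
move=> q0; elim: s l => [|g s IH] l Hl.
  case: l Hl => [|y l] Hl; last by move: (Hl y (mem_head y l)).
  by exists [::], [::]; rewrite !big_nil expr1n mulr1; do !split => //; rewrite muln0.
have Hl' : forall y, y \in filter (predC1 g) l -> y \in s.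
  move=> y; rewrite mem_filter => /andP [/= Hyg /Hl]; rewrite inE.
  by case/orP => // /eqP Hy; rewrite Hy eqxx in Hyg.
have [l1 [l2 [Hp [Hs1 [Hsz Hsz2]]]]] := IH _ Hl'.
set c := count_mem g l.
exists (nseq (c %/ q) g ++ l1), (nseq (c %% q) g ++ l2); split; [|split; [|split]].
- rewrite (count_split g) Hp !big_cat /= !prod_nseq -/c {1}(divn_eq c q).
  by rewrite exprD exprMn -exprM mulnC mulrACA.
- by move=> y; rewrite mem_cat => /orP [/nseqP [-> _]|/Hs1]; rewrite inE ?eqxx // => ->; rewrite orbT.
- have Hc : size l = c + size (filter (predC1 g) l).
    by rewrite size_filter -(count_predC (pred1 g)) /c.
  rewrite Hc Hsz !size_cat !size_nseq {1}(divn_eq c q).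
  lia.
- rewrite size_cat size_nseq /=.
  have := ltn_pmod c q0; rewrite mulSn; move: Hsz2; move: (c %% q)%nat => r; by move=> H1 H2; apply: leq_add => //; apply: ltnW.
Qed.


Lemma ideal_pow_one (a : A -> Prop) : ideal_pow a 0 1.
Proof. by apply: gi_gen; exists [::]; rewrite big_nil. Qed.

Lemma ideal_pow_anti (a : A -> Prop) s t : (s <= t)%nat ->
  psubset (ideal_pow a t) (ideal_pow a s).
Proof.
move=> Hst; apply: gi_min; first exact: gi_ideal.
move=> x [l [Hl [Ha ->]]]; rewrite -(cat_take_drop s l) big_cat /=.
apply: ideal_mulr; first exact: gi_ideal.
apply: gi_gen; exists (take s l); split; first by rewrite size_takel // Hl.
by split => // y /mem_take /Ha.
Qed.

Lemma p_gt0 : (0 < p)%nat.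
Proof. by case: p hchar => // /pcharf_prime. Qed.

Lemma pigeon (a I : A -> Prop) (sg : seq A) e m :
  (forall x, a x <-> gen_ideal (fun y => y \in sg) x) -> is_ideal I ->
  psubset (ideal_pow a m) I ->
  psubset (ideal_pow a ((m + size sg) * expn p e)) (frob_pow I (expn p e)).
Proof.
move=> Ha HI HaI x Hx; move: (expand Ha Hx); apply: gi_min; first exact: frob_ideal.
have q0 : (0 < expn p e)%nat by rewrite expn_gt0 p_gt0.
move=> y [l [Hsz [Hl ->]]].
have [l1 [l2 [-> [Hs1 [Hsz1 Hsz2]]]]] := split_mono q0 Hl.
have Hm : (m <= size l1)%nat.
  rewrite -(leq_pmul2l q0); rewrite Hsz in Hsz1.
  have : ((m + size sg) * expn p e <= expn p e * size l1 + size sg * expn p e)%nat.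
    by rewrite Hsz1 leq_add2l.
  by rewrite mulnDl leq_add2r mulnC.
rewrite -(cat_take_drop m l1) big_cat /= exprMn -mulrA.
apply: ideal_mulr; first exact: frob_ideal.
apply: frob_gen; apply: HaI; apply: gi_gen; exists (take m l1); split.
  by rewrite size_takel.
by split => // z /mem_take /Hs1 Hz; apply/Ha; apply: gi_gen.
Qed.

End Alg.

Lemma max_le (P : nat -> Prop) m t : is_max_nat P m -> P t -> (t <= m)%nat.
Proof. by case=> _ H; apply: H. Qed.

Lemma max_ext (P Q : nat -> Prop) m : (forall t, P t <-> Q t) -> is_max_nat P m -> is_max_nat Q m.
Proof. by move=> H [Pm Hm]; split; [apply/H | move=> n /H /Hm]. Qed.

Lemma max_exists (P : nat -> Prop) t0 B : P t0 -> (forall t, P t -> (t <= B)%nat) ->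
  exists m, is_max_nat P m.
Proof.
elim: B t0 => [|B IH] t0 P0 HB.
  exists 0%nat; split; last by move=> n /HB.
  by have := HB _ P0; rewrite leqn0 => /eqP <-.
case: (classic (P B.+1)) => HP.
  by exists B.+1; split.
have HB' : forall t, P t -> (t <= B)%nat.
  move=> t Pt; have := HB _ Pt; rewrite leq_eqVlt => /orP [/eqP Et|//].
  by rewrite Et in Pt.
exact: (IH t0 P0 HB').
Qed.

Unset Implicit Arguments.

Section Main.

Lemma c_is_ext (A : comNzRingType) p (a b b' : A -> Prop) l :
  (forall x, b x <-> b' x) -> c_is p a b l -> c_is p a b' l.
Proof.
move=> H [u [Hu Hu']]; exists u; split => // e.
apply: (max_ext _ (Hu e)) => t; split => Hn Hs; apply: Hn => x /Hs; apply: frob_mono => y /H //.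
Qed.

Lemma fwd (A : comNzRingType) p (a J K : A -> Prop) l (u v : nat -> nat) e :
  (0 < p)%nat -> (forall E, bJ p a J E (u E)) -> (forall E, nu p a J E (v E)) ->
  Un_cv (fun E => Rdiv (INR (u E)) (INR (expn p E))) l ->
  Un_cv (fun E => Rdiv (INR (v E)) (INR (expn p E))) l ->
  (forall e', psubset (frob_pow J (expn p (e + e'))) (frob_pow K (expn p e'))) ->
  (forall e', psubset (frob_pow K (expn p e')) (Je p (e + e') J)) ->
  c_is p a K (Rmult (INR (expn p e)) l).
Proof.
move=> Hp Hu Hv Hu' Hv' H1 H2.
have Hw : forall e', exists w, nu p a K e' w /\ (u (e + e') <= w)%nat /\ (w <= v (e + e'))%nat.
  move=> e'.
  have P0 : ~ psubset (ideal_pow a (u (e + e'))) (frob_pow K (expn p e')).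
    move=> Hs; apply: (proj1 (Hu (e + e'))) => x /Hs /H2 //.
  have Bd : forall t, ~ psubset (ideal_pow a t) (frob_pow K (expn p e')) -> (t <= v (e + e'))%nat.
    move=> t Ht; apply: (proj2 (Hv (e + e'))) => Hs; apply: Ht => x /Hs /H1 //.
  have [m Hm] := max_exists P0 Bd.
  exists m; split => //; split; [exact: (max_le Hm P0) | exact: (Bd _ (proj1 Hm))].
have [w Hw'] := choice _ Hw.
exists w; split; first by move=> e'; case: (Hw' e').
apply: (squeeze _ _ _ _ _ (cv_shift_scale p u l e Hp Hu') (cv_shift_scale p v l e Hp Hv')).
move=> n; have [_ [Ha Hb]] := Hw' n; split; exact: div_mono.
Qed.

End Main.

Theorem mainTheorem18 (A : comNzRingType) (p : nat)
  (hp : prime p) (hchar : p \in GRing.pchar A)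
  (hFfin : F_finite A p) (hFpure : F_pure A p)
  (a J : A -> Prop) (ha : is_ideal a) (hJ : is_ideal J)
  (haJ : psubset a (radical J)) :
  (exists l : R, ct_is p a J l /\ c_is p a J l) <->
  (forall e : nat, exists l : R,
     c_is p a (Je p e J) l /\ c_is p a (frob_pow J (expn p e)) l).
Proof.
have Hp1 : (1 < p)%nat by apply: prime_gt1.
have Hp : (0 < p)%nat by apply: ltnW.
have [sg Hsg] := (proj1 hFfin) a ha.
split.
- move=> [l [[u [Hu Hu']] [v [Hv Hv']]]] e.
  exists (Rmult (INR (expn p e)) l); split.
  + apply: (fwd A p a J _ l u v e Hp Hu Hv Hu' Hv') => e'; first exact: frobJ_sub.
    exact: Je_frob_sub.
  + apply: (fwd A p a J _ l u v e Hp Hu Hv Hu' Hv') => e'; first exact: frob_frob_sub.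
    move=> x Hx; apply: (@Je_frob_sub A p hchar e e' J hJ).
    by move: Hx; apply: frob_mono; apply: frob_in_Je.
- move=> H.
  have [L HL] := choice _ H.
  have HWZ : forall e, exists wz : (nat -> nat) * (nat -> nat),
      ((forall e', nu p a (Je p e J) e' (wz.1 e')) /\
        Un_cv (fun e' => Rdiv (INR (wz.1 e')) (INR (expn p e'))) (L e)) /\
      ((forall e', nu p a (frob_pow J (expn p e)) e' (wz.2 e')) /\
        Un_cv (fun e' => Rdiv (INR (wz.2 e')) (INR (expn p e'))) (L e)).
    move=> e; have [[w Hw] [z Hz]] := HL e; by exists (w, z).
  have [WZ HWZ'] := choice _ HWZ.
  set W := fun e => (WZ e).1.
  set Z := fun e => (WZ e).2.
  have [v [Hv Hv']] : c_is p a J (L 0%nat).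
    apply: (c_is_ext A p a (frob_pow J (expn p 0)) J (L 0%nat)); first exact: frob1.
    by have [_ ?] := HL 0%nat.
  exists (L 0%nat); split; last by exists v.
  have HbJ : forall e, bJ p a J e (W e 0%nat).
    move=> e; have [[HW _] _] := HWZ' e.
    apply: (max_ext _ (HW 0%nat)) => t.
    have E := frob1 p (Je_ideal p e hJ).
    by split => Hn Hs; apply: Hn => x /Hs /E.
  exists (fun e => W e 0%nat); split => //.
  apply: (squeeze _ _ _ _ _ (cv_lower p (INR (1 + size sg)) (L 0%nat) Hp1) Hv').
  move=> e; set b0 := W e 0%nat.
  have [[HW HW'] [HZ HZ']] := HWZ' e.
  have Hup : (b0 <= v e)%nat.
    apply: (proj2 (Hv e)) => Hs; apply: (proj1 (HbJ e)) => x /Hs.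
    exact: frob_in_Je.
  have Hsat : psubset (ideal_pow a b0.+1) (Je p e J).
    apply: NNPP => Hn; have := proj2 (HbJ e) _ Hn; by rewrite ltnn.
  have Hbnd : forall e', (W e e' < (b0.+1 + size sg) * expn p e')%nat.
    move=> e'; rewrite ltnNge; apply/negP => Hge.
    apply: (proj1 (HW e')) => x /(ideal_pow_anti Hge).
    exact: (pigeon hchar Hsg (Je_ideal p e hJ) Hsat).
  have HLe : Rle (L e) (INR (b0.+1 + size sg)).
    apply: (lim_le_const _ _ _ _ HW') => e'.
    by apply: div_lt_bound; [rewrite expn_gt0 Hp | exact: Hbnd].
  have HLl : Rle (Rmult (INR (expn p e)) (L 0%nat)) (L e).
    eapply Rle_cv_lim; [|exact: (cv_shift_scale p v (L 0%nat) e Hp Hv')|exact: HZ'] => e'.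
    apply: div_mono.
    apply: (proj2 (HZ e')) => Hs; apply: (proj1 (Hv (e + e')%nat)) => x /Hs.
    exact: (frob_frob_sup hchar).
  split; last exact: div_mono.
  apply: (lower_bound _ _ _ _ (L e) (INR_expn_pos p e Hp) HLl).
  rewrite -plus_INR; have -> : (b0 + (1 + size sg))%coq_nat = (b0.+1 + size sg)%nat by rewrite plusE addnA addn1.
  exact: HLe.
Qed.
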